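(* Let $0 \le q < p < 1$ and $s \in [0,1]$, and set $\alpha := p - q$ and $\rho := q/(1-\alpha)$. Consider the minimal random walk model: $\{X_i\}_{i\ge1}$ are $\{0,1\}$-valued with $P(X_1=1) = s$, and for each $n\ge1$, with $U_n$ uniform on $\{1,\dots,n\}$ (independent of everything else), if $X_{U_n}=1$ then $X_{n+1}=1$ with probability $p$ and $0$ otherwise, while if $X_{U_n}=0$ then $X_{n+1}=1$ with probability $q$ and $0$ otherwise. Let $H_n := \sum_{i=1}^n X_i$, and let $E_{p,q,s}$, $V_{p,q,s}$ denote expectation and variance for this model. Let $T_n$ be the random recursive tree on vertices $\{1,\dots,n\}$ (vertex $1$ alone initially; for $i=2,\dots,n$, vertex $i$ is joined to a uniformly chosen vertex among $\{1,\dots,i-1\}$), and perform Bernoulli bond percolation on $T_n$ in which each edge is retained independently with probability $\alpha$ and removed otherwise; denote expectation for this model by $E_\alpha$. Let $\mathcal{C}_{1,n}$ be the cluster containing vertex $1$, and let $\mathcal{C}_{1,n},\mathcal{C}_{2,n},\dots,\mathcal{C}_{n,n}$ be an enumeration of the clusters (setting $\mathcal{C}_{j,n} = \emptyset$ when $j$ exceeds the number of clusters). Then $$E_{p,q,s}[H_n] = \rho n + (s-\rho)\, E_\alpha[\#\mathcal{C}_{1,n}],$$ and $$V_{p,q,s}[H_n] = \rho(1-\rho)\sum_{j=1}^n E_\alpha[(\#\mathcal{C}_{j,n})^2] + (1-2\rho)(s-\rho)\, E_\alpha[(\#\mathcal{C}_{1,n})^2] - (s-\rho)^2\, (E_\a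lpha[\#\mathcal{C}_{1,n}])^2.$$
   Context: $\#\mathcal{C}$ denotes the number of vertices of a cluster $\mathcal{C}$. The enumeration of clusters other than $\mathcal{C}_{1,n}$ is arbitrary (e.g. by smallest vertex label); the formulas only involve $\mathcal{C}_{1,n}$ and sums over all clusters. *)

(* Defs.v *)
From HB Require Import structures.
From mathcomp Require Import all_boot all_order all_algebra.
Set Implicit Arguments. Unset Strict Implicit. Unset Printing Implicit Defensive.
Import Order.TTheory GRing.Theory Num.Theory.
Local Open Scope ring_scope.

(* Vertices / time indices 1..n are represented by 'I_n, i.e. 0..n-1
   (index k stands for k+1). *)

(* P(X_{k+1} = b | X_{U_k} = a) *)
Definition mrw_trans (R : realFieldType) (p q : R) (a b : bool) : R :=
  if b then (if a then p else q) else (if a then 1 - p else 1 - q).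

(* Joint law of (X_1,...,X_n): X_1 ~ Bernoulli(s); given X_1..X_k, U_k is
   uniform on {1..k} and X_{k+1} is drawn from mrw_trans (X_{U_k}) .
   (0-indexed: factor for index k>0 averages over u < k.) *)
Definition mrw_weight (R : realFieldType) (p q s : R) (n : nat)
    (x : {ffun 'I_n -> bool}) : R :=
  \prod_(k : 'I_n)
    (if val k == 0%N then (if x k then s else 1 - s)
     else (val k)%:R^-1 * \sum_(u : 'I_n | (val u < val k)%N) mrw_trans p q (x u) (x k)).

Definition mrw_E (R : realFieldType) (p q s : R) (n : nat)
    (f : {ffun 'I_n -> bool} -> R) : R :=
  \sum_(x : {ffun 'I_n -> bool}) mrw_weight p q s x * f x.

Definition mrw_V (R : realFieldType) (p q s : R) (n : nat)
    (f : {ffun 'I_n -> bool} -> R) : R :=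
  mrw_E p q s (fun x => f x ^+ 2) - (mrw_E p q s f) ^+ 2.

Definition H (R : realFieldType) (n : nat) (x : {ffun 'I_n -> bool}) : R :=
  \sum_(i : 'I_n) (if x i then 1 else 0).

(* configuration: parent function and edge-retention bits; vertex i>0 is
   joined to par i (< i), the edge {i, par i} being retained iff b i. *)
Definition rrt_conf (n : nat) : finType :=
  ({ffun 'I_n -> 'I_n} * {ffun 'I_n -> bool})%type.

(* law: par i uniform on {0..i-1}, b i Bernoulli(alpha), all independent;
   for the root we fix par 0 = 0, b 0 = false (dummy values). *)
Definition rrt_weight (R : realFieldType) (alpha : R) (n : nat)
    (c : rrt_conf n) : R :=
  \prod_(i : 'I_n)
    (if val i == 0%N then (if (c.1 i == i) && ~~ c.2 i then 1 else 0)
     else (if (val (c.1 i) < val i)%N then (val i)%:R^-1 else 0)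
          * (if c.2 i then alpha else 1 - alpha)).

Definition perc_E (R : realFieldType) (alpha : R) (n : nat)
    (f : rrt_conf n -> R) : R :=
  \sum_(c : rrt_conf n) rrt_weight alpha c * f c.

Definition open_edge (n : nat) (c : rrt_conf n) : rel 'I_n :=
  fun i j => (c.2 i && (c.1 i == j)) || (c.2 j && (c.1 j == i)).

Definition cluster (n : nat) (c : rrt_conf n) (v : 'I_n) : {set 'I_n} :=
  [set w | connect (open_edge c) v w].

Definition clusters (n : nat) (c : rrt_conf n) : {set {set 'I_n}} :=
  [set cluster c v | v : 'I_n].

Definition root_cluster_size (R : realFieldType) (n : nat) (c : rrt_conf n) : R :=
  #|[set w : 'I_n | [exists v : 'I_n, (val v == 0%N) && connect (open_edge c) v w]]|%:R.

(* sum over all clusters C of (#C)^2 ; equals sum_{j=1}^n (#C_{j,n})^2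
   since padded empty clusters contribute 0 *)
Definition sum_sq_clusters (R : realFieldType) (n : nat) (c : rrt_conf n) : R :=
  \sum_(C in clusters c) (#|C|%:R) ^+ 2.

(* Main.v *)
Require Import Defs.
From HB Require Import structures.
From mathcomp Require Import all_boot all_order all_algebra.
From mathcomp Require Import ring lra.
Import Order.TTheory GRing.Theory Num.Theory.
Set Implicit Arguments. Unset Strict Implicit. Unset Printing Implicit Defensive.
Local Open Scope ring_scope.

Fixpoint rootf (n : nat) (c : rrt_conf n) (f : nat) (v : 'I_n) : 'I_n :=
  if f is f'.+1 then
    (if c.2 v && (val (c.1 v) < val v)%N then rootf c f' (c.1 v) else v)
  else v.
Arguments rootf {n}.

Definition rootv (n : nat) (c : rrt_conf n) (v : 'I_n) : 'I_n := rootf c (val v).+1 v.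
Arguments rootv {n}.

Lemma rootf_fuel n (c : rrt_conf n) f1 f2 v :
  (val v < f1)%N -> (val v < f2)%N -> rootf c f1 v = rootf c f2 v.
Proof.
elim: f1 f2 v => [|f1 IH] [|f2] v //= h1 h2.
case: ifP => // /andP[_ hp]; apply: IH; exact: leq_trans hp _.
Qed.

Lemma rootvE n (c : rrt_conf n) v :
  rootv c v = if c.2 v && (val (c.1 v) < val v)%N then rootv c (c.1 v) else v.
Proof.
rewrite /rootv.
have -> : rootf c (val v).+1 v = if c.2 v && (val (c.1 v) < val v)%N then rootf c (val v) (c.1 v) else v by [].
case: ifP => // /andP[_ hp]; exact: rootf_fuel.
Qed.

Definition supp (n : nat) (c : rrt_conf n) := forall k, c.2 k -> (val (c.1 k) < val k)%N.
Arguments supp {n}.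

Lemma rootvS n (c : rrt_conf n) v : supp c ->
  rootv c v = if c.2 v then rootv c (c.1 v) else v.
Proof. move=> hs; rewrite rootvE; case hb: (c.2 v) => //=; by rewrite hs. Qed.

Lemma edge_root n (c : rrt_conf n) v w : supp c -> open_edge c v w -> rootv c v = rootv c w.
Proof.
move=> hs; rewrite /open_edge => /orP[/andP[hb /eqP <-]|/andP[hb /eqP <-]].
  by rewrite [in LHS]rootvS // hb.
by rewrite [in RHS]rootvS // hb.
Qed.

Lemma connect_rootf n (c : rrt_conf n) f v : connect (open_edge c) v (rootf c f v).
Proof.
elim: f v => [|f IH] v /=; first exact: connect0.
case: ifP => [/andP[hb _]|_]; last exact: connect0.
apply: connect_trans (IH _); apply: connect1; by rewrite /open_edge hb eqxx.
Qed.

Lemma connect_rootv n (c : rrt_conf n) v w : supp c ->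
  connect (open_edge c) v w = (rootv c v == rootv c w).
Proof.
move=> hs; apply/idP/idP.
  move/connectP=> [pth hp ->]; elim: pth v hp => //= y pth IH v /andP[e hp].
  by rewrite (edge_root hs e); apply: IH.
move/eqP=> e; apply: connect_trans (connect_rootf c (val v).+1 v) _.
rewrite -/(rootv c v) e.
have sym : connect_sym (open_edge c).
  by apply: sym_connect_sym => x y; rewrite /open_edge orbC.
by rewrite sym; apply: connect_rootf.
Qed.


Lemma root0 n (c : rrt_conf n) v : val v = 0%N -> rootv c v = v.
Proof. by move=> h; rewrite rootvE h ltn0 andbF. Qed.

Lemma connect_sym_open n (c : rrt_conf n) : connect_sym (open_edge c).
Proof. by apply: sym_connect_sym => x y; rewrite /open_edge orbC. Qed.

Lemma card_sum (R : realFieldType) (T : finType) (A : {set T}) :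
  (#|A|%:R : R) = \sum_w (if w \in A then 1 else 0).
Proof. by rewrite -sum1_card natr_sum big_mkcond. Qed.

Lemma rcs_root (R : realFieldType) n (c : rrt_conf n) : supp c ->
  root_cluster_size R c = \sum_w (if val (rootv c w) == 0%N then 1 else 0).
Proof.
move=> hs; rewrite /root_cluster_size card_sum; apply: eq_bigr => w _.
rewrite inE; congr (if _ then _ else _); apply/existsP/idP.
  move=> [v /andP[/eqP hv]]; rewrite connect_rootv // root0 // => /eqP <-.
  by rewrite hv.
move=> h; exists (rootv c w); rewrite h /= connect_sym_open.
exact: connect_rootf.
Qed.

Lemma cluster_root n (c : rrt_conf n) v : supp c ->
  cluster c v = [set w | rootv c v == rootv c w].
Proof. by move=> hs; apply/setP => w; rewrite !inE connect_rootv. Qed.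

Lemma ssc_root (R : realFieldType) n (c : rrt_conf n) : supp c ->
  sum_sq_clusters R c = \sum_v \sum_w (if rootv c v == rootv c w then 1 else 0).
Proof.
move=> hs.
have -> : \sum_v \sum_w (if rootv c v == rootv c w then 1 else 0) = \sum_v (#|cluster c v|%:R : R).
  by apply: eq_bigr => v _; rewrite card_sum; apply: eq_bigr => w _; rewrite cluster_root // inE.
rewrite (partition_big (cluster c) (mem (clusters c))) /=; last first.
  by move=> v _; rewrite /clusters; apply: imset_f.
rewrite /sum_sq_clusters; apply: eq_bigr => C /imsetP[w _ ->].
have e : forall v, (cluster c v == cluster c w) = (rootv c v == rootv c w).
  move=> v; rewrite !cluster_root //; apply/eqP/eqP => [h|->] //.
  have : v \in [set u | rootv c v == rootv c u] by rewrite inE.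
  by rewrite h inE => /eqP.
rewrite (eq_bigr (fun _ => (#|cluster c w|%:R : R))); last first.
  by move=> v /eqP ->.
rewrite sumr_const expr2 -(mulr_natr (#|cluster c w|%:R)); congr (_ * _); congr (_%:R).
apply: eq_card => v; rewrite [in LHS]inE connect_rootv // eq_sym -e; by [].
Qed.


Definition ev (R : realFieldType) (s rho : R) n (k : 'I_n) : R :=
  if val k == 0%N then s else rho.
Definition Bz (R : realFieldType) (s rho : R) n (k : 'I_n) (b : bool) : R :=
  if b then ev s rho k else 1 - ev s rho k.
Definition zw (R : realFieldType) (s rho : R) n (z : {ffun 'I_n -> bool}) : R :=
  \prod_k Bz s rho k (z k).
Definition ind (R : realFieldType) (b : bool) : R := if b then 1 else 0.
Arguments ind {R}.

Lemma sum_prod (R : realFieldType) (I J : finType) (F : I -> J -> R) :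
  \sum_(f : {ffun I -> J}) \prod_i F i (f i) = \prod_i \sum_j F i j.
Proof. by rewrite bigA_distr_bigA. Qed.

Lemma prod_pick (R : realFieldType) (I : finType) (j : I) (a : I -> R) :
  \prod_i (if i == j then a i else 1) = a j.
Proof. by rewrite (bigD1 j) //= eqxx big1 ?mulr1 // => i /negbTE ->. Qed.

Lemma zw1 (R : realFieldType) (s rho : R) n : \sum_z zw s rho (n:=n) z = 1.
Proof.
rewrite /zw sum_prod big1 // => k _; by rewrite big_bool /Bz /= addrCA subrr addr0.
Qed.

Lemma zwX (R : realFieldType) (s rho : R) n (j : 'I_n) :
  \sum_z zw s rho z * ind (z j) = ev s rho j.
Proof.
rewrite (eq_bigr (fun z : {ffun 'I_n -> bool} => \prod_k (Bz s rho k (z k) * (if k == j then ind (z k) else 1)))); last first.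
  by move=> z _; rewrite big_split /= (prod_pick j (fun k => ind (z k))).
rewrite (sum_prod (fun k b => Bz s rho k b * (if k == j then ind b else 1))) -(prod_pick j (fun k => ev s rho k)); apply: eq_bigr => k _.
rewrite big_bool /= /Bz /ind; case: (k == j); rewrite ?mulr1 ?mulr0 ?addr0 //.
by rewrite addrCA subrr addr0.
Qed.

Lemma zwXX (R : realFieldType) (s rho : R) n (j j' : 'I_n) :
  \sum_z zw s rho z * (ind (z j) * ind (z j')) =
  if j == j' then ev s rho j else ev s rho j * ev s rho j'.
Proof.
case: eqP => [<-|/eqP ne].
  rewrite -zwX; apply: eq_bigr => z _; by rewrite /ind; case: (z j); rewrite ?mulr1 ?mulr0.
rewrite (eq_bigr (fun z : {ffun 'I_n -> bool} => \prod_k (Bz s rho k (z k) * ((if k == j then ind (z k) else 1) * (if k == j' then ind (z k) else 1))))); last first.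
  by move=> z _; rewrite big_split /= big_split /= (prod_pick j (fun k => ind (z k))) (prod_pick j' (fun k => ind (z k))).
rewrite (sum_prod (fun k b => Bz s rho k b * ((if k == j then ind b else 1) * (if k == j' then ind b else 1)))) -(prod_pick j (fun k => ev s rho k)) -(prod_pick j' (fun k => ev s rho k)) -big_split /=.
apply: eq_bigr => k _.
rewrite big_bool /= /Bz /ind; case: (eqVneq k j) => [->|nj]; first by rewrite (negbTE ne) !mulr1 mulr0 addr0.
case: (k == j'); rewrite ?mul1r ?mulr1 ?mulr0 ?addr0 //.
by rewrite addrCA subrr addr0.
Qed.


Lemma sum_conf (R : realFieldType) n (G : rrt_conf n -> R) :
  \sum_(c : rrt_conf n) G c = \sum_(a : {ffun 'I_n -> 'I_n}) \sum_(b : {ffun 'I_n -> bool}) G (a, b).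
Proof. by rewrite pair_big /=; apply: eq_big => // [[a b]]. Qed.

Lemma sum_lt (R : realFieldType) n (i : nat) (hi : (i <= n)%N) (F : nat -> R) :
  \sum_(a < n) (if (a < i)%N then F a else 0) = \sum_(a < i) F a.
Proof. by rewrite -big_mkcond /= (big_ord_widen _ _ hi). Qed.

Lemma inv_nat_sum (R : realFieldType) (i : nat) : (0 < i)%N -> \sum_(a < i) (i%:R : R)^-1 = 1.
Proof.
move=> hi; rewrite sumr_const card_ord -(mulr_natr ((i%:R : R)^-1)) mulVf //.
by rewrite pnatr_eq0 -lt0n.
Qed.

Definition rf (R : realFieldType) (alpha : R) n (i : 'I_n) (a : 'I_n) (b : bool) : R :=
  if val i == 0%N then (if (a == i) && ~~ b then 1 else 0)
  else (if (val a < val i)%N then (val i)%:R^-1 else 0) * (if b then alpha else 1 - alpha).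

Lemma rrt_weightE (R : realFieldType) (alpha : R) n (c : rrt_conf n) :
  rrt_weight alpha c = \prod_i rf alpha i (c.1 i) (c.2 i).
Proof. by []. Qed.

Lemma rrt_sum1 (R : realFieldType) (alpha : R) n :
  \sum_(c : rrt_conf n) rrt_weight alpha c = 1.
Proof.
rewrite sum_conf.
rewrite (eq_bigr (fun a : {ffun 'I_n -> 'I_n} => \prod_i \sum_(b : bool) rf alpha i (a i) b)); last first.
  move=> a _; rewrite (bigA_distr_bigA (fun i b => rf alpha i (a i) b)) /=; apply: eq_bigr => b _; by rewrite rrt_weightE.
rewrite -(bigA_distr_bigA (fun i a => \sum_(b : bool) rf alpha i a b)) /=.
apply: big1 => i _.
rewrite /rf; case: eqP => [h0|hne].
  under eq_bigr => a _ do rewrite big_bool /= andbT andbF /= add0r.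
  rewrite (bigD1 i) //= eqxx big1 ?addr0 // => a ha.
  by rewrite (negbTE ha).
rewrite (eq_bigr (fun a : 'I_n => if (val a < val i)%N then (val i)%:R^-1 else 0)); last first.
  by move=> a _; rewrite big_bool /= -mulrDr addrCA subrr addr0 mulr1.
rewrite (@sum_lt _ n (val i) (ltnW (ltn_ord i)) (fun _ => (val i)%:R^-1)).
by apply: inv_nat_sum; rewrite lt0n; apply/eqP.
Qed.

Lemma rw_supp (R : realFieldType) (alpha : R) n (c : rrt_conf n) :
  rrt_weight alpha c != 0 -> supp c.
Proof.
rewrite rrt_weightE => /prodf_neq0 h k hb; have := h k isT; rewrite /rf hb /=.
rewrite andbF; case: (val k =P 0%N) => _ /=; first by rewrite eqxx.
by case: (ltnP (c.1 k) k) => //= _; rewrite mul0r eqxx.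
Qed.


Definition xof n (c : rrt_conf n) (z : {ffun 'I_n -> bool}) : {ffun 'I_n -> bool} :=
  [ffun i => z (rootv c i)].

Lemma prod_ind (R : realFieldType) (I : finType) (P : I -> bool) :
  \prod_i (ind (P i) : R) = ind [forall i, P i].
Proof.
case: forallP => [h|hn].
  by apply: big1 => i _; rewrite /ind h.
have [i hi] : exists i, ~~ P i by apply/existsP; rewrite -negb_forall; apply/forallP.
by rewrite (bigD1 i) //= /ind (negbTE hi) mul0r.
Qed.

Lemma local n (c : rrt_conf n) z x : supp c ->
  (xof c z == x) = [forall k, (if c.2 k then x (c.1 k) else z k) == x k].
Proof.
move=> hs; apply/eqP/forallP => [<- k|h].
  rewrite !ffunE [rootv c k]rootvS //; by case: (c.2 k).
apply/ffunP => k; rewrite ffunE.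
suff : forall m (k : 'I_n), (val k < m)%N -> z (rootv c k) = x k by apply; exact: ltnSn.
elim=> // m IH k' hk; rewrite rootvS //; have := h k'.
case hb: (c.2 k') => /eqP <- //; apply: IH.
by have := hs k' hb => h1; apply: leq_trans h1 _.
Qed.

Definition G (R : realFieldType) (alpha s rho : R) n (x : {ffun 'I_n -> bool})
  (k : 'I_n) (a : 'I_n) (b z : bool) : R :=
  rf alpha k a b * Bz s rho k z * ind ((if b then x a else z) == x k).

Lemma pointwise (R : realFieldType) (alpha s rho : R) n (x : {ffun 'I_n -> bool}) c z :
  rrt_weight alpha c * zw s rho z * ind (xof c z == x) =
  \prod_k G alpha s rho x k (c.1 k) (c.2 k) (z k).
Proof.
rewrite /G big_split big_split /= -rrt_weightE -/(zw s rho z).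
have [->|nz] := eqVneq (rrt_weight alpha c) 0; first by rewrite !mul0r.
by rewrite prod_ind local //; apply: rw_supp nz.
Qed.


Lemma trans_id (R : realFieldType) (p q : R) (a b : bool) :
  1 - (p - q) != 0 ->
  mrw_trans p q a b = (p - q) * ind (a == b) + (1 - (p - q)) * (if b then q / (1 - (p - q)) else 1 - q / (1 - (p - q))).
Proof.
move=> h; rewrite /mrw_trans /ind; case: a; case: b => /=; field => //.
Qed.

Lemma sumG_k0 (R : realFieldType) (alpha s rho : R) n (x : {ffun 'I_n -> bool}) (k : 'I_n) :
  val k = 0%N ->
  \sum_a \sum_b \sum_z G alpha s rho x k a b z = if x k then s else 1 - s.
Proof.
move=> hk; rewrite (bigD1 k) //= [X in _ + X = _]big1 => [|a ha]; last first.
  by rewrite big_bool /= !big_bool /= /G /rf hk /= (negbTE ha) /= !mul0r !addr0.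
rewrite addr0 big_bool /= !big_bool /= /G /rf /Bz /ev hk eqxx /= /ind.
by case: (x k) => /=; rewrite eqxx /= !mul0r !mul1r ?mulr0 ?mulr1 ?addr0 ?add0r.
Qed.

Lemma sumG_kS (R : realFieldType) (p q s : R) n (x : {ffun 'I_n -> bool}) (k : 'I_n) :
  val k != 0%N -> 1 - (p - q) != 0 ->
  \sum_a \sum_b \sum_z G (p - q) s (q / (1 - (p - q))) x k a b z =
  (val k)%:R^-1 * \sum_(u : 'I_n | (val u < val k)%N) mrw_trans p q (x u) (x k).
Proof.
move=> hk h; rewrite [in RHS]big_mkcond mulr_sumr; apply: eq_bigr => a _.
rewrite big_bool /= !big_bool /= /G /rf (negbTE hk) /Bz /ev (negbTE hk).
case: ifP => _; last by rewrite !mul0r !addr0 mulr0.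
rewrite trans_id // /ind; case: (x a); case: (x k) => /=; ring.
Qed.

Lemma mw_coupling (R : realFieldType) (p q s : R) n (x : {ffun 'I_n -> bool}) :
  1 - (p - q) != 0 ->
  mrw_weight p q s x = \sum_(c : rrt_conf n) \sum_z
     rrt_weight (p - q) c * zw s (q / (1 - (p - q))) z * ind (xof c z == x).
Proof.
move=> h; set alpha := p - q; set rho := q / (1 - alpha).
transitivity (\prod_k \sum_a \sum_b \sum_z G alpha s rho x k a b z).
  rewrite /mrw_weight; apply: eq_bigr => k _.
  case: eqP => [hk|hk]; first by rewrite sumG_k0.
  by rewrite sumG_kS //; apply/eqP.
rewrite (bigA_distr_bigA (fun k a => \sum_b \sum_z G alpha s rho x k a b z)) sum_conf.
apply: eq_bigr => fa _.
rewrite (bigA_distr_bigA (fun k b => \sum_z G alpha s rho x k (fa k) b z)).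
apply: eq_bigr => fb _.
rewrite (bigA_distr_bigA (fun k z => G alpha s rho x k (fa k) (fb k) z)).
by apply: eq_bigr => fz _; rewrite pointwise.
Qed.

Lemma mrwE_coupling (R : realFieldType) (p q s : R) n (f : {ffun 'I_n -> bool} -> R) :
  1 - (p - q) != 0 ->
  mrw_E p q s f = \sum_(c : rrt_conf n) rrt_weight (p - q) c *
     \sum_z zw s (q / (1 - (p - q))) z * f (xof c z).
Proof.
move=> h; rewrite /mrw_E.
under eq_bigr do rewrite mw_coupling // mulr_suml.
rewrite exchange_big /=; apply: eq_bigr => c _.
under eq_bigr do rewrite mulr_suml.
rewrite exchange_big /= mulr_sumr; apply: eq_bigr => z _.
rewrite (bigD1 (xof c z)) //= big1 ?addr0 => [|x hx]; last by rewrite eq_sym /ind (negbTE hx) !mulr0 mul0r.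
by rewrite eqxx /ind mulr1 mulrA.
Qed.


Lemma EzH (R : realFieldType) (s rho : R) n (c : rrt_conf n) :
  \sum_z zw s rho z * H R (xof c z) = \sum_i ev s rho (rootv c i).
Proof.
rewrite /H; under eq_bigr do rewrite mulr_sumr.
rewrite exchange_big /=; apply: eq_bigr => i _.
rewrite -(zwX s rho (rootv c i)); apply: eq_bigr => z _; by rewrite ffunE.
Qed.

Lemma EzH2 (R : realFieldType) (s rho : R) n (c : rrt_conf n) :
  \sum_z zw s rho z * H R (xof c z) ^+ 2 =
  \sum_i \sum_j (if rootv c i == rootv c j then ev s rho (rootv c i)
                 else ev s rho (rootv c i) * ev s rho (rootv c j)).
Proof.
rewrite /H; under eq_bigr do rewrite expr2 mulr_suml mulr_sumr.
rewrite exchange_big /=; apply: eq_bigr => i _.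
rewrite [LHS](eq_bigr (fun z => \sum_(j < n) zw s rho z * (ind (xof c z i) * ind (xof c z j)))); last by move=> z _; rewrite !mulr_sumr.
rewrite exchange_big /=; apply: eq_bigr => j _.
rewrite -(zwXX s rho (rootv c i) (rootv c j)); apply: eq_bigr => z _.
by rewrite !ffunE.
Qed.

Definition Kc (R : realFieldType) n (c : rrt_conf n) : R :=
  \sum_i ind (val (rootv c i) == 0%N).
Definition Sc (R : realFieldType) n (c : rrt_conf n) : R :=
  \sum_i \sum_j ind (rootv c i == rootv c j).

Lemma ev_d (R : realFieldType) (s rho : R) n (r : 'I_n) :
  ev s rho r = rho + (s - rho) * ind (val r == 0%N).
Proof. rewrite /ev /ind; case: (val r == 0%N); ring. Qed.

Lemma EzH_K (R : realFieldType) (s rho : R) n (c : rrt_conf n) :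
  \sum_i ev s rho (rootv c i) = rho * n%:R + (s - rho) * Kc R c.
Proof.
under eq_bigr do rewrite ev_d.
by rewrite big_split /= sumr_const card_ord mulr_natr -mulr_sumr.
Qed.

Lemma pair_id (R : realFieldType) (s rho : R) n (ri rj : 'I_n) :
  (if ri == rj then ev s rho ri else ev s rho ri * ev s rho rj) =
  ev s rho ri * ev s rho rj + rho * (1 - rho) * ind (ri == rj)
  + (s - rho) * (1 - rho - s) * (ind (val ri == 0%N) * ind (val rj == 0%N)).
Proof.
case: (eqVneq ri rj) => [<-|ne].
  by rewrite /ev /ind; case: (val ri == 0%N); ring.
rewrite /ind.
case: (eqVneq (val ri) 0%N) => h1; case: (eqVneq (val rj) 0%N) => h2.
- by case/eqP: ne; apply: val_inj; rewrite h1 h2.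
all: rewrite /ev ?h1 ?h2 ?eqxx ?(negbTE h1) ?(negbTE h2) /=; ring.
Qed.

Lemma EzH2_K (R : realFieldType) (s rho : R) n (c : rrt_conf n) :
  \sum_i \sum_j (if rootv c i == rootv c j then ev s rho (rootv c i)
                 else ev s rho (rootv c i) * ev s rho (rootv c j)) =
  (rho * n%:R + (s - rho) * Kc R c) ^+ 2 + rho * (1 - rho) * Sc R c
  + (s - rho) * (1 - rho - s) * Kc R c ^+ 2.
Proof.
under eq_bigr do under eq_bigr do rewrite pair_id.
rewrite -EzH_K /Sc /Kc !expr2 !mulr_suml.
rewrite !mulr_sumr -!big_split /=; apply: eq_bigr => i _.
rewrite !mulr_sumr -!big_split /=; apply: eq_bigr => j _.
ring.
Qed.


Lemma lin2 (R : realFieldType) (I : finType) (w f : I -> R) a b :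
  \sum_i w i * (a + b * f i) = a * \sum_i w i + b * \sum_i w i * f i.
Proof. rewrite !mulr_sumr -big_split; apply: eq_bigr => i _ /=; ring. Qed.

Lemma lin4 (R : realFieldType) (I : finType) (w f g h : I -> R) a b c d :
  \sum_i w i * (a + b * f i + c * g i + d * h i) =
  a * \sum_i w i + b * \sum_i w i * f i + c * \sum_i w i * g i + d * \sum_i w i * h i.
Proof. rewrite !mulr_sumr -!big_split; apply: eq_bigr => i _ /=; ring. Qed.

Lemma supp_rewrite (R : realFieldType) (alpha : R) n (F1 F2 : rrt_conf n -> R) :
  (forall c, supp c -> F1 c = F2 c) ->
  \sum_(c : rrt_conf n) rrt_weight alpha c * F1 c = \sum_(c : rrt_conf n) rrt_weight alpha c * F2 c.
Proof.
move=> h; apply: eq_bigr => c _.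
have [->|nz] := eqVneq (rrt_weight alpha c) 0; first by rewrite !mul0r.
by rewrite h //; apply: rw_supp nz.
Qed.

Unset Implicit Arguments.

Theorem theoremA3 (R : realFieldType) (p q s : R) (n : nat)
  (hq : 0 <= q) (hqp : q < p) (hp : p < 1) (hs0 : 0 <= s) (hs1 : s <= 1)
  (hn : (0 < n)%N) :
  let alpha := p - q in
  let rho := q / (1 - alpha) in
  mrw_E p q s (fun x : {ffun 'I_n -> bool} => H R x)
    = rho * n%:R + (s - rho) * perc_E alpha (@root_cluster_size R n)
  /\
  mrw_V p q s (fun x : {ffun 'I_n -> bool} => H R x)
    = rho * (1 - rho) * perc_E alpha (@sum_sq_clusters R n)
      + (1 - 2 * rho) * (s - rho) * perc_E alpha (fun c : rrt_conf n => root_cluster_size R c ^+ 2)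
      - (s - rho) ^+ 2 * (perc_E alpha (@root_cluster_size R n)) ^+ 2.
Proof.
move=> alpha rho.
have h1 : 1 - (p - q) != 0 by rewrite gt_eqF //; lra.
have EK : perc_E alpha (@root_cluster_size R n) = \sum_(c : rrt_conf n) rrt_weight alpha c * Kc R c.
  by rewrite /perc_E; apply: supp_rewrite => c hc; rewrite rcs_root.
have EK2 : perc_E alpha (fun c : rrt_conf n => root_cluster_size R c ^+ 2)
    = \sum_(c : rrt_conf n) rrt_weight alpha c * Kc R c ^+ 2.
  by rewrite /perc_E; apply: supp_rewrite => c hc; rewrite rcs_root.
have ES : perc_E alpha (@sum_sq_clusters R n) = \sum_(c : rrt_conf n) rrt_weight alpha c * Sc R c.
  by rewrite /perc_E; apply: supp_rewrite => c hc; rewrite ssc_root.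
have W := rrt_sum1 alpha n.
have EH : mrw_E p q s (fun x : {ffun 'I_n -> bool} => H R x) =
    rho * n%:R * \sum_(c : rrt_conf n) rrt_weight alpha c + (s - rho) * \sum_(c : rrt_conf n) rrt_weight alpha c * Kc R c.
  rewrite mrwE_coupling // -lin2; apply: eq_bigr => c _.
  by rewrite EzH EzH_K.
have EH2 : mrw_E p q s (fun x : {ffun 'I_n -> bool} => H R x ^+ 2) =
    (rho * n%:R) ^+ 2 * \sum_(c : rrt_conf n) rrt_weight alpha c
    + 2 * rho * n%:R * (s - rho) * \sum_(c : rrt_conf n) rrt_weight alpha c * Kc R c
    + ((s - rho) ^+ 2 + (s - rho) * (1 - rho - s)) * \sum_(c : rrt_conf n) rrt_weight alpha c * Kc R c ^+ 2
    + rho * (1 - rho) * \sum_(c : rrt_conf n) rrt_weight alpha c * Sc R c.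
  rewrite mrwE_coupling // -lin4; apply: eq_bigr => c _.
  rewrite EzH2 EzH2_K; congr (_ * _); rewrite /rho /alpha; ring.
rewrite /mrw_V EH2 EH EK EK2 ES W /rho /alpha; split; ring.
Qed.
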